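(* Let $(G,\alpha)$ be an edge-labeled graph with $n$ vertices $v_1,\dots,v_n$ over $\mathbb{Z}/m\mathbb{Z}$ and let $1<i\le n$. Let $f=\big[\bigcup_{k=1}^{i-1}\{(p^{(i,k)})\}\big]$ be the least common multiple of the greatest common divisors of all $v_k$-trails of $v_i$, over $k=1,\dots,i-1$, and suppose $f\not\equiv 0\pmod m$. Then there exists an $i$-th flow-up class $\bar F^{(i)}=(\bar 0,\dots,\bar 0,\bar f^{(i)}_{v_i},\dots,\bar f^{(i)}_{v_n})\in\mathcal F_i$ (so $\bar f^{(i)}_{v_j}=\bar 0$ for all $j<i$) with $\bar f^{(i)}_{v_i}=f+m\mathbb{Z}$.
   Context: Let $m\ge 2$ and $G=(V,E)$ a finite simple connected graph with ordered vertices $v_1,\dots,v_n$. An edge-labeling $\alpha$ assigns to each edge a nonzero ideal of $\mathbb{Z}/m\mathbb{Z}$; each edge $e$ is labeled by the ideal $\alpha(e)=\langle l_e+m\mathbb{Z}\rangle$ generated by the class of a positive integer $l_e$, the integer representative (smallest positive integer of the coset) of the label. A spline on $(G,\alpha)$ is $F=(f_{v_1},\dots,f_{v_n})\in(\mathbb{Z}/m\mathbb{Z})^n$ with $f_{v_a}-f_{v_b}\in\alpha(v_av_b)$ for each edge $v_av_b$. An $i$-th flow-up class is a spline with $f_{v_i}\ne0$ and $f_{v_t}=0$ for $t<i$; $\mathcal F_i$ is the set of these. A trail is a sequence of vertices and edges, consecutive vertices joined by the listed edge, in which no edge is repeated; a $v_k$-trail of $v_i$ is a trail from $v_i$ to $v_k$.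 For such a trail $p^{(i,k)}$, $(p^{(i,k)})$ is the gcd (in $\mathbb{Z}$) of the integer representatives $l_e$ of its edges; $\{(p^{(i,k)})\}$ is the set of these over all $v_k$-trails of $v_i$; $[\,S\,]$ denotes the least common multiple of a finite set $S$ of integers. *)

(* Defs.v *)
From mathcomp Require Import all_boot all_order all_algebra.
From mathcomp Require Import boolp.
Set Implicit Arguments. Unset Strict Implicit. Unset Printing Implicit Defensive.
Import Order.TTheory GRing.Theory Num.Theory.

(* Vertices v_1..v_n are the ordinals 'I_n (v_{j+1} is ordinal j).
   The graph is a symmetric irreflexive relation [e]; labels are given by their
   integer representatives [l x y] (meaningful only when [e x y]). *)

Definition simple_graph n (e : rel 'I_n) :=
  symmetric e /\ irreflexive e.

Definition connected_graph n (e : rel 'I_n) :=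
  forall x y : 'I_n, connect e x y.

Definition uedge n (xy : 'I_n * 'I_n) : 'I_n * 'I_n :=
  if (xy.1 <= xy.2)%N then xy else (xy.2, xy.1).

Definition walk_edges n (x : 'I_n) (p : seq 'I_n) := zip (x :: p) p.

Definition is_trail n (e : rel 'I_n) (x y : 'I_n) (p : seq 'I_n) : bool :=
  [&& path e x p, last x p == y & uniq (map (@uedge n) (walk_edges x p))].

Definition trail_gcd n (l : 'I_n -> 'I_n -> nat) (x : 'I_n) (p : seq 'I_n) : nat :=
  foldr gcdn 0%N (map (fun xy => l xy.1 xy.2) (walk_edges x p)).

Definition trail_gcd_value n (e : rel 'I_n) (l : 'I_n -> 'I_n -> nat)
  (i : 'I_n) (d : nat) : Prop :=
  exists (k : 'I_n) (p : seq 'I_n),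
    (k < i)%N /\ is_trail e i k p /\ trail_gcd l i p = d.

(* f = lcm of the finite set above; every element is the gcd of a nonempty
   trail with labels in [1, m-1], hence lies in 'I_m, so ranging d over 'I_m
   loses nothing. *)
Definition flow_f n (m : nat) (e : rel 'I_n) (l : 'I_n -> 'I_n -> nat) (i : 'I_n) : nat :=
  \big[lcmn/1%N]_(d < m | `[< trail_gcd_value e l i d >]) d.

(* labels: nonzero ideals <l_e + mZ>, l_e the smallest positive representative *)
Definition valid_labels n (m : nat) (e : rel 'I_n) (l : 'I_n -> 'I_n -> nat) :=
  forall x y, e x y -> (0 < l x y < m)%N /\ l x y = l y x.

Open Scope ring_scope.

Definition is_spline n (m : nat) (e : rel 'I_n) (l : 'I_n -> 'I_n -> nat)
  (F : 'I_n -> 'Z_m) : Prop :=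
  forall a b, e a b -> exists c : 'Z_m, F a - F b = c * (l a b)%:R.

Definition flow_up n (m : nat) (e : rel 'I_n) (l : 'I_n -> 'I_n -> nat)
  (i : 'I_n) (F : 'I_n -> 'Z_m) : Prop :=
  is_spline e l F /\ F i != 0 /\ (forall t : 'I_n, (t < i)%N -> F t = 0).

(* Main.v *)
Require Import Defs.
From mathcomp Require Import all_boot all_order all_algebra.
From mathcomp Require Import ring boolp.
Import GRing.Theory.
Local Open Scope ring_scope.

Lemma zip_rel (T : eqType) (r : rel T) (x : T) (p : seq T) :
  path r x p -> forall xy, xy \in zip (x :: p) p -> r xy.1 xy.2.
Proof.
elim: p x => [|y p IH] x //= /andP[rxy pp] xy; rewrite inE => /orP[/eqP->//|].
exact: IH.
Qed.

Lemma zip_mem (T : eqType) (x : T) (p : seq T) a b :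
  (a, b) \in zip (x :: p) p -> (a \in x :: p) /\ (b \in p).
Proof.
elim: p x => [|y p IH] x //=; rewrite inE => /orP[/eqP[-> ->]|/IH [h1 h2]].
  by rewrite !inE !eqxx.
by rewrite h1 orbT; split => //; rewrite in_cons h2 orbT.
Qed.

Lemma uedge_mem n (x y : 'I_n) : x \in [:: (uedge (x, y)).1; (uedge (x, y)).2].
Proof. by rewrite /uedge /=; case: ifP; rewrite !inE eqxx ?orbT. Qed.

Lemma uniq_walk n (x : 'I_n) (p : seq 'I_n) :
  uniq (x :: p) -> uniq (map (@uedge n) (walk_edges x p)).
Proof.
elim: p x => [|y p IH] x //= /andP[xn uyp].
rewrite IH // andbT; apply/negP=> /mapP [[a b] ab_in eq_ue].
have [ha hb] := zip_mem _ _ _ _ _ ab_in.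
have hb' : b \in y :: p by rewrite in_cons hb orbT.
have := uedge_mem _ x y; rewrite eq_ue /uedge /=.
by case: ifP => _; rewrite !inE => /orP[] /eqP xe; move: xn; rewrite xe ?ha ?hb'.
Qed.

Lemma foldr_gcd_dvd (q : nat) (s : seq nat) :
  (forall z, z \in s -> (q %| z)%N) -> (q %| foldr gcdn 0 s)%N.
Proof.
elim: s => [|z s IH] H //=; rewrite dvdn_gcd H ?mem_head // IH // => w ws.
by apply: H; rewrite in_cons ws orbT.
Qed.

Lemma dvd_flow (m n : nat) (e : rel 'I_n) (l : 'I_n -> 'I_n -> nat) (i : 'I_n) d :
  (d < m)%N -> trail_gcd_value e l i d -> (d %| flow_f m e l i)%N.
Proof.
move=> dm hd; rewrite /flow_f (bigD1 (Ordinal dm)) /=; first exact: dvdn_lcml.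
exact/asboolP.
Qed.

Lemma Zp_nat_eq0 (m f : nat) : (1 < m)%N -> ((f%:R : 'Z_m) == 0) = (f %% m == 0)%N.
Proof.
move=> m1; rewrite Zp_nat -val_eqE /= Zp_cast //.
Qed.

Theorem mainTheorem3 (m n : nat) (e : rel 'I_n) (l : 'I_n -> 'I_n -> nat)
  (i : 'I_n) :
  (1 < m)%N ->
  simple_graph e -> connected_graph e -> valid_labels m e l ->
  (0 < i)%N ->
  (flow_f m e l i %% m != 0)%N ->
  exists F : 'I_n -> 'Z_m,
    flow_up e l i F /\ F i = (flow_f m e l i)%:R.
Proof.
move=> m1 [esym eirr] _ vl i0 fm.
set f := flow_f m e l i in fm *.
have fpos : (0 < f)%N by move: fm; case: (f) => //; rewrite mod0n.
pose Jv (y : 'Z_m) := exists F : 'I_n -> 'Z_m,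
  [/\ is_spline e l F, (forall t : 'I_n, (t < i)%N -> F t = 0) & F i = f%:R * y].
have Jlin : forall y1 y2 c1 c2, Jv y1 -> Jv y2 -> Jv (c1 * y1 + c2 * y2).
  move=> y1 y2 c1 c2 [F1 [s1 z1 v1]] [F2 [s2 z2 v2]].
  exists (fun t => c1 * F1 t + c2 * F2 t); split.
  - move=> a b eab; have [k1 h1] := s1 a b eab; have [k2 h2] := s2 a b eab.
    exists (c1 * k1 + c2 * k2).
    have -> : c1 * F1 a + c2 * F2 a - (c1 * F1 b + c2 * F2 b) =
      c1 * (F1 a - F1 b) + c2 * (F2 a - F2 b) by ring.
    rewrite h1 h2; ring.
  - by move=> t ti; rewrite z1 // z2 // !mulr0 addr0.
  - rewrite v1 v2; ring.
have Jgcd : forall a b : nat, Jv a%:R -> Jv b%:R -> Jv (gcdn a b)%:R.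
  move=> a b ja jb; have [u [v huv]] := Bezoutz a b.
  have -> : (gcdn a b)%:R = (u%:~R : 'Z_m) * a%:R + v%:~R * b%:R.
    have -> : (gcdn a b)%:R = ((gcdn a b)%:Z%:~R : 'Z_m) by [].
    have -> : (gcdn a b)%:Z = gcdz a b by [].
    by rewrite -huv intrD !intrM.
  exact: Jlin.
have Jind : forall (C : pred 'I_n) (x : nat), C i -> (forall t : 'I_n, (t < i)%N -> ~~ C t) ->
    (forall a b, e a b -> C a -> ~~ C b -> (l a b %| f * x)%N) -> Jv x%:R.
  move=> C x Ci CZ Ccross.
  exists (fun t => if C t then (f * x)%:R else 0); split.
  - move=> a b eab.
    case Ca: (C a); case Cb: (C b).
    + by exists 0; rewrite subrr mul0r.
    + have /dvdnP [q hq] := Ccross a b eab Ca (negbT Cb).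
      by exists q%:R; rewrite subr0 hq natrM.
    + have eba : e b a by rewrite esym.
      have /dvdnP [q hq] := Ccross b a eba Cb (negbT Ca).
      exists (- q%:R); rewrite sub0r hq natrM mulNr.
      by have [_ ->] := vl b a eba.
    + by exists 0; rewrite subrr mul0r.
  - by move=> t ti; rewrite (negbTE (CZ t ti)).
  - by rewrite Ci natrM.
set L := (m.-1)`!.
have Lpos : (0 < L)%N by exact: fact_gt0.
have lL : forall a b, e a b -> (l a b %| L)%N.
  move=> a b eab; have [/andP [l0 lm] _] := vl a b eab.
  by apply: dvdn_fact; rewrite l0 /=; rewrite -ltnS prednK // (ltn_trans _ m1).
have JL : Jv L%:R.
  apply: (Jind [pred t : 'I_n | (i <= t)%N]) => /=.
  - by [].
  - by move=> t ti; rewrite -ltnNge.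
  - by move=> a b eab _ _; apply: dvdn_mull; exact: lL.
have Jp : forall p, prime p -> Jv (partn L (p^'))%:R.
  move=> p pp.
  set k := logn p f.
  pose e' := [rel x y | e x y && (p ^ k.+1 %| l x y)%N].
  apply: (Jind [pred t | connect e' i t]) => /=.
  - exact: connect0.
  - move=> t ti; apply/negP => /connectP [q pq tq].
    move: ti; rewrite tq; case/shortenP: pq => q' pq' uq' _ ti.
    case: q' pq' uq' ti => [|y q''] pq' uq' ti; first by rewrite ltnn in ti.
    set d := trail_gcd l i (y :: q'').
    have tv : trail_gcd_value e l i d.
      exists (last i (y :: q'')), (y :: q''); split => //; split => //.
      apply/and3P; split => //; last exact: uniq_walk.
      by apply: sub_path pq' => x z /andP[].
    have pd : (p ^ k.+1 %| d)%N.
      apply: foldr_gcd_dvd => z /mapP [[a b] ab ->].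
      by have /andP[] := zip_rel _ _ _ _ pq' (a, b) ab.
    have eiy : e i y by move: pq' => /= /andP[/andP[]].
    have [/andP [l0 lm] _] := vl i y eiy.
    have dm : (d < m)%N.
      apply: leq_ltn_trans lm; rewrite /d /trail_gcd /=.
      by apply: dvdn_leq l0 _; exact: dvdn_gcdl.
    have := dvd_flow _ _ _ _ _ _ dm tv.
    by move=> /(dvdn_trans pd); rewrite pfactor_dvdn // ltnn.
  - move=> a b eab Ca Cb.
    have nd : ~~ (p ^ k.+1 %| l a b)%N.
      apply/negP => hd; move/negP: Cb; apply; apply: connect_trans Ca _.
      by apply: connect1; rewrite /= eab hd.
    have [/andP [l0 _] _] := vl a b eab.
    rewrite -(partnC p l0); apply: dvdn_mul.
    + rewrite p_part; apply: (@dvdn_trans (p ^ k)%N).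
      * by apply: dvdn_exp2l; move: nd; rewrite pfactor_dvdn // -leqNgt.
      * by rewrite pfactor_dvdn.
    + by apply: partn_dvd => //; exact: lL.
have desc : forall N, (0 < N)%N -> (N %| L)%N -> Jv N%:R -> Jv 1.
  elim/ltn_ind => N IH Npos NL JN.
  have [N1e|N1] := eqVneq N 1%N; first by move: JN; rewrite N1e.
  have N1' : (1 < N)%N by rewrite ltn_neqAle eq_sym N1.
  set p := pdiv N.
  have pp : prime p := pdiv_prime N1'.
  set g := gcdn N (partn L (p^')).
  have Jg : Jv g%:R by apply: Jgcd => //; exact: Jp.
  have gpos : (0 < g)%N by rewrite gcdn_gt0 Npos.
  have gL : (g %| L)%N by apply: dvdn_trans NL; exact: dvdn_gcdl.
  apply: (IH g) => //.
  rewrite ltn_neqAle dvdn_leq ?dvdn_gcdl // andbT.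
  apply/eqP => gN.
  have : (N %| partn L (p^'))%N by rewrite -gN dvdn_gcdr.
  move=> /(dvdn_trans (pdiv_dvd N)) pdv.
  have pin : p \in \pi(partn L (p^')) by rewrite mem_primes pp part_gt0 pdv.
  have := @pnatPpi (p^') (partn L (p^')) p (part_pnat _ _) pin.
  by rewrite !inE eqxx.
have [F [sF zF vF]] := desc L Lpos (dvdnn L) JL.
exists F; split; last by rewrite vF mulr1.
split => //; split => //.
by rewrite vF mulr1 Zp_nat_eq0.
Qed.
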